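(* In the model and protocol $\mathrm{OciorABA}^*$ described in the context, with $n\ge 3t+1$, if all honest nodes input the same message $w$, then at least $t+1$ of the instances $\mathrm{ABBA}_1,\dots,\mathrm{ABBA}_n$ eventually output $1$.
   Context: Model: there are $n$ nodes $\mathrm{Node}_1,\dots,\mathrm{Node}_n$ in an asynchronous network (every message sent between honest nodes is eventually delivered, with arbitrary adversarial delay). An adaptive adversary may corrupt (make dishonest/Byzantine) at most $t$ nodes in total; $\mathcal F\subseteq[1:n]$ denotes the set of dishonest nodes; $n\ge 3t+1$. Primitives used as black boxes: (RBC) For each $j\in[1:n]$ there is a reliable broadcast instance $\mathrm{RBC}_j$ with leader $\mathrm{Node}_j$, satisfying: Consistency (if two honest nodes output $w',w''$ then $w'=w''$); Validity (if the leader is honest and inputs $w$, every honest node eventually outputs $w$); Totality (if one honest node outputs a value, every honest node eventually outputs a value). (ABBA) For each $j\in[1:n]$ there is a binary Byzantine agreement instance $\mathrm{ABBA}_j$ (inputs and outputs in $\{0,1\}$), satisfying: Termination (if all honest nodes provide inputs, every honest node eventually outputs a value and terminates); Consistency (if an honest node outputs $b$, every honest node eventually outputs $b$); Validity (if all honest nodes input the same $b$, every honest node eventually outputs $b$). (Erasure code) An $(n,t+1)$ erasure code over an alphabet $\Sigma$: an encoder $\mathrm{Enc}$ mapping a message $w$ to $(\mathrm{Enc}_1(w),\dots,\mathrm{Enc}_n(w))\in\Sigma^n$ and a decoder $\mathrm{Dec}$ such that for every set $K\subseteq[1:n]$ with $|K|=t+1$, $\mathrm{Dec}(\{\mathrm{Enc}_j(w)\}_{j\in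 K})=w$. Protocol $\mathrm{OciorABA}^*$, code for an honest $\mathrm{Node}_i$ with input message $w_i$: (1) Compute $(y^{(i)}_1,\dots,y^{(i)}_n)=\mathrm{Enc}(w_i)$ and input $y^{(i)}_i$ into $\mathrm{RBC}_i$ (as leader). (2) Upon delivery of a value $y^{(j)}_j$ from $\mathrm{RBC}_j$ (after step (1) has been executed), if $\mathrm{Node}_i$ has not yet given an input to $\mathrm{ABBA}_j$: set $a_i[j]=1$ if $y^{(j)}_j=y^{(i)}_j$ and $a_i[j]=0$ otherwise, and input $a_i[j]$ into $\mathrm{ABBA}_j$. (3) Upon obtaining outputs from $n-t$ of the instances $\mathrm{ABBA}_1,\dots,\mathrm{ABBA}_n$, input $0$ into every $\mathrm{ABBA}_j$ to which $\mathrm{Node}_i$ has not yet given an input. (4) Upon obtaining outputs from all $n$ ABBA instances: let $S=\{j:\mathrm{ABBA}_j\text{ output }1\}$. If $|S|<t+1$, output a default value $\bot$ and terminate. Otherwise let $K$ be the set of the $t+1$ smallest elements of $S$, wait for delivery of $y^{(j)}_j$ from $\mathrm{RBC}_j$ for all $j\in K$, output $\mathrm{Dec}(\{y^{(j)}_j\}_{j\in K})$ and terminate. *)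

(* Defs.v *)
From mathcomp Require Import all_boot all_order.
Set Implicit Arguments. Unset Strict Implicit. Unset Printing Implicit Defensive.

(* An event record: [Some (s, v)] = the event happened at (discrete) time [s]
   with value [v]; [None] = it never happens. *)

(* Binary histories for the family ABBA_1..ABBA_n:
   [h j i] = input (resp. output) of node i in instance ABBA_j. *)
Definition hist (n : nat) := 'I_n -> 'I_n -> option (nat * bool).

Definition trunc_lt (T : nat) (o : option (nat * bool)) : option (nat * bool) :=
  if o is Some (s, b) then (if s < T then o else None) else None.
Definition trunc_le (T : nat) (o : option (nat * bool)) : option (nat * bool) :=
  if o is Some (s, b) then (if s <= T then o else None) else None.

(* The black-box ABBA instances, as a (causal) map from the honest nodes'
   input histories to the honest nodes' output histories; the adversary's
   strategy inside the ABBAs is baked into the map.  The properties hold for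
   every input history the environment may provide (black-box security). *)
Definition ABBA_family (n : nat) (F : {set 'I_n}) (A : hist n -> hist n) : Prop :=
  [/\ (forall (T : nat) (x x' : hist n),
         (forall j i, i \notin F -> trunc_lt T (x j i) = trunc_lt T (x' j i)) ->
         forall j i, i \notin F -> trunc_le T (A x j i) = trunc_le T (A x' j i)),
      (forall (x : hist n) j,
         (forall i, i \notin F -> x j i <> None) ->
         forall i, i \notin F -> A x j i <> None),
      (forall (x : hist n) j i k s b,
         i \notin F -> k \notin F -> A x j i = Some (s, b) ->
         exists s', A x j k = Some (s', b)) &
      (forall (x : hist n) j b,
         (forall i, i \notin F -> exists s, x j i = Some (s, b)) ->
         forall i, i \notin F -> exists s, A x j i = Some (s, b))].

(* The RBC instances: [D j i] = delivery (time, value) of RBC_j at node i;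
   [lead j] = the input of leader j (relevant when j is honest). *)
Definition RBC_family (n : nat) (F : {set 'I_n}) (Sigma : Type)
    (lead : 'I_n -> Sigma) (D : 'I_n -> 'I_n -> option (nat * Sigma)) : Prop :=
  [/\
      (forall j i k s s' v v', i \notin F -> k \notin F ->
         D j i = Some (s, v) -> D j k = Some (s', v') -> v = v'),
      (forall j, j \notin F -> forall i, i \notin F ->
         exists s, D j i = Some (s, lead j)) &
      (forall j i, i \notin F -> D j i <> None ->
         forall k, k \notin F -> D j k <> None)].

Definition erasure_code (n t : nat) (M Sigma : Type)
    (Enc : M -> 'I_n -> Sigma) (Dec : ('I_n -> option Sigma) -> M) : Prop :=
  forall (w : M) (K : {set 'I_n}), #|K| = t.+1 ->
    Dec (fun j => if j \in K then Some (Enc w j) else None) = w.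

Definition out_by (T : nat) (o : option (nat * bool)) : bool :=
  if o is Some (s, _) then s <= T else false.
Definition triggered (n t : nat) (out : hist n) (i : 'I_n) (T : nat) : bool :=
  n - t <= #|[set j : 'I_n | out_by T (out j i)]|.

(* Steps (2) and (3) of OciorABA*, for every honest node i and instance j:
   [inp j i] is the input node i gives to ABBA_j.  Step (1) happens at time 0;
   step (2) fires at the delivery time of RBC_j unless step (3) has already
   fired strictly earlier; step (3) fires at the first time node i has
   obtained n - t ABBA outputs (ties broken arbitrarily). *)
Definition protocol_run (n t : nat) (F : {set 'I_n}) (M : Type) (Sigma : eqType)
    (Enc : M -> 'I_n -> Sigma) (winp : 'I_n -> M)
    (D : 'I_n -> 'I_n -> option (nat * Sigma)) (out inp : hist n) : Prop :=
  forall j i, i \notin F ->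
    match inp j i with
    | Some (s, b) =>
        (exists y, [/\ D j i = Some (s, y), b = (y == Enc (winp i) j)
                     & forall T, T < s -> ~~ triggered t out i T])
        \/
        ([/\ b = false, triggered t out i s,
             forall T, T < s -> ~~ triggered t out i T
           & forall s' y, D j i = Some (s', y) -> s <= s'])
    | None => D j i = None /\ forall T, ~~ triggered t out i T
    end.

Definition outputs_one (o : option (nat * bool)) : bool :=
  if o is Some (_, b) then b else false.

(* Main.v *)
Require Import Defs.
From mathcomp Require Import all_boot all_order.
From Stdlib Require Import Classical.
From mathcomp Require Import zify.

Lemma honest_one (n t : nat) (F : {set 'I_n}) (M : Type) (Sigma : eqType)
  (Enc : M -> 'I_n -> Sigma) (winp : 'I_n -> M) (w : M)
  (Hsame : forall i, i \notin F -> winp i = w)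
  (D : 'I_n -> 'I_n -> option (nat * Sigma))
  (HD : RBC_family F (fun j => Enc (winp j) j) D) j i s b y :
  j \notin F -> i \notin F -> D j i = Some (s, y) -> b = (y == Enc (winp i) j) -> b = true.
Proof.
move=> hj hi hD ->; case: HD => _ hv _.
have [s' hs'] := hv j hj i hi.
rewrite hD in hs'; case: hs' => _ ->.
by rewrite (Hsame j hj) (Hsame i hi) eqxx.
Qed.
Arguments honest_one {n t F M Sigma Enc winp w} Hsame {D} HD {j i s b y}.

Theorem lemma4 (n t : nat) (Hnt : 3 * t + 1 <= n)
  (F : {set 'I_n}) (HF : #|F| <= t)
  (M : Type) (Sigma : eqType)
  (Enc : M -> 'I_n -> Sigma) (Dec : ('I_n -> option Sigma) -> M)
  (Hcode : erasure_code t Enc Dec)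
  (winp : 'I_n -> M) (w : M) (Hsame : forall i, i \notin F -> winp i = w)
  (D : 'I_n -> 'I_n -> option (nat * Sigma))
  (HD : RBC_family F (fun j => Enc (winp j) j) D)
  (A : hist n -> hist n) (HA : ABBA_family F A)
  (inp : hist n) (Hrun : protocol_run t F Enc winp D (A inp) inp) :
  t.+1 <= #|[set j : 'I_n | [forall i : 'I_n, (i \notin F) ==> outputs_one (A inp j i)]]|.
Proof.
case: HA => Hcaus Hterm Hcons Hval.
have hcF : #|~: F| >= n - t.
  by rewrite cardsCs setCK card_ord; apply: leq_sub2l.
pose P := fun T => [exists i, (i \notin F) && triggered t (A inp) i T].
have Hhon : forall j, j \notin F -> (forall i, i \notin F -> exists s, inp j i = Some (s, true)) ->
   j \in [set j : 'I_n | [forall i : 'I_n, (i \notin F) ==> outputs_one (A inp j i)]].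
  move=> j hj H; rewrite inE; apply/forallP => i; apply/implyP => hi.
  by have [s ->] := Hval inp j true H i hi.
case: (classic (exists T, P T)) => [exT|nexT].
- pose T0 := ex_minn exT.
  have [hT0 minT0] : P T0 /\ forall T, P T -> T0 <= T.
    by rewrite /T0; case: ex_minnP.
  case/existsP: hT0 => i0 /andP [hi0 trig0].
  pose S := [set j | out_by T0 (A inp j i0)] :&: ~: F.
  have hS : t.+1 <= #|S|.
    have h1 := leq_card_setU ([set j | out_by T0 (A inp j i0)] :&: ~: F) F.
    have h2 : [set j | out_by T0 (A inp j i0)] \subset ([set j | out_by T0 (A inp j i0)] :&: ~: F) :|: F.
      apply/subsetP => j hj; rewrite !inE; rewrite inE in hj; rewrite hj /=.
      by case: (j \in F).
    have h3 := subset_leq_card h2.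
    move: trig0; rewrite /triggered => h4.
    have := leq_trans h4 (leq_trans h3 h1); rewrite -/S.
    move=> h5; clear -h5 HF Hnt; move: h5 HF Hnt; move: #|S| #|F| => a b; lia.
  apply: (leq_trans hS); apply: subset_leq_card; apply/subsetP => j.
  rewrite !inE => /andP [hout hj].
  pose x' : hist n := fun j i => if trunc_lt T0 (inp j i) is Some _ then inp j i else Some (T0, true).
  have htr : forall j i, i \notin F -> trunc_lt T0 (inp j i) = trunc_lt T0 (x' j i).
    move=> j' i _; rewrite /x'; case: (inp j' i) => [[s b]|] /=; last by rewrite ltnn.
    by case: ifP => hs /=; rewrite ?hs ?ltnn.
  have hall : forall i, i \notin F -> exists s, x' j i = Some (s, true).
    move=> i1 hi; rewrite /x'.
    have := Hrun j i1 hi.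
    case E: (inp j i1) => [[s b]|] /=; last by exists T0.
    case: ifP => hs; last by exists T0.
    case.
    + case=> y [hDy hb _]; exists s; congr Some; congr pair.
      exact: (honest_one Hsame HD hj hi hDy hb).
    + case=> _ trig _ _; exfalso.
      have : T0 <= s by apply: minT0; apply/existsP; exists i1; rewrite hi trig.
      by rewrite leqNgt hs.
  have hc := Hcaus T0 inp x' htr j i0 hi0.
  have [s' hs'] := Hval x' j true hall i0 hi0.
  move: hout hc; rewrite hs'; case E: (A inp j i0) => [[s b]|] //= hsT.
  rewrite hsT; case: ifP => // _ [_ hb]; subst b.
  apply/forallP => k; apply/implyP => hk.
  by have [s2 ->] := Hcons inp j i0 k s true hi0 hk E.
- have notrig : forall i T, ~~ triggered t (A inp) i T \/ i \in F.
    move=> i T; case: (boolP (i \in F)) => hi; first by right.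
    left; apply/negP => tr; apply: nexT; exists T; apply/existsP; exists i; by rewrite hi tr.
  have hsub : ~: F \subset [set j : 'I_n | [forall i : 'I_n, (i \notin F) ==> outputs_one (A inp j i)]].
    2: { have h := subset_leq_card hsub; move: hcF h HF Hnt.
         move: #|~: F| #|F| #|[set j : 'I_n | [forall i : 'I_n, (i \notin F) ==> outputs_one (A inp j i)]]| => a b c; lia. }
  apply/subsetP => j; rewrite inE => hj.
  apply: Hhon => // i1 hi.
  have := Hrun j i1 hi.
  case E: (inp j i1) => [[s b]|] /=.
  + case.
    * case=> y [hDy hb _]; exists s; congr Some; congr pair.
      exact: (honest_one Hsame HD hj hi hDy hb).
    * case=> _ trig _ _; case: (notrig i1 s) => [/negP //|]; by rewrite (negPf hi).
  + case=> hD _; case: HD => _ hv _; have [s hs] := hv j hj i1 hi.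
    by rewrite hD in hs.
Qed.
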